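(* For every group $H$, the nullification functor $P_H$ in the category of groups is conditionally flat.
   Context: For a group homomorphism $\varphi\colon A\to B$, a group $M$ is $\varphi$-local if $\mathrm{Hom}(B,M)\to\mathrm{Hom}(A,M)$ is a bijection; the localization functor $L_\varphi$ assigns to each group $G$ a $\varphi$-local group $L_\varphi G$ with a natural homomorphism $G\to L_\varphi G$ initial among homomorphisms to $\varphi$-local groups. The nullification $P_H$ is $L_\varphi$ for $\varphi\colon H\to\{e\}$. For a functor $L$ on groups, a group extension $1\to N\to E\to Q\to 1$ is $L$-flat if $1\to LN\to LE\to LQ\to 1$ is again a short exact sequence; $L$ is conditionally flat if for every $L$-flat extension $1\to N\to E\to Q\to 1$ and every homomorphism $Q'\to Q$, the pullback extension $1\to N\to E\times_Q Q'\to Q'\to 1$ is $L$-flat. *)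

(* Defs.v *)
From Stdlib Require Import ProofIrrelevance.
Set Implicit Arguments.

Record group := Group {
  car :> Type;
  mul : car -> car -> car;
  one : car;
  inv : car -> car;
  mulA : forall x y z, mul x (mul y z) = mul (mul x y) z;
  mul1g : forall x, mul one x = x;
  mulVg : forall x, mul (inv x) x = one
}.
Arguments mul {g} _ _.
Arguments one {g}.
Arguments inv {g} _.
Arguments mulA {g} x y z.
Arguments mul1g {g} x.
Arguments mulVg {g} x.

Record hom (G K : group) := Hom {
  hfun :> G -> K;
  hmulP : forall x y, hfun (mul x y) = mul (hfun x) (hfun y)
}.

Lemma mulgV {G : group} (x : G) : mul x (inv x) = one.
Proof.
  set (y := inv x).
  transitivity (mul (mul (inv y) y) (mul x y)).
  { rewrite mulVg, mul1g. reflexivity. }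
  rewrite <- mulA, (mulA y x y). unfold y at 2. rewrite mulVg, mul1g.
  apply mulVg.
Qed.

Lemma mulg1 {G : group} (x : G) : mul x one = x.
Proof. rewrite <- (mulVg x), mulA, mulgV. apply mul1g. Qed.

Lemma hom1 {G K : group} (f : hom G K) : f one = one.
Proof.
  assert (E : f one = mul (f one) (f one)) by (rewrite <- hmulP, mul1g; reflexivity).
  transitivity (mul (mul (inv (f one)) (f one)) (f one)).
  { rewrite mulVg, mul1g. reflexivity. }
  rewrite <- mulA, <- E. apply mulVg.
Qed.

Lemma homV (G K : group) (f : hom G K) (x : G) : f (inv x) = inv (f x).
Proof.
  rewrite <- (mulg1 (f (inv x))), <- (mulgV (f x)), mulA, <- hmulP, mulVg, hom1.
  apply mul1g.
Qed.

Definition hom_eq (G K : group) (f g : hom G K) : Prop := forall x, f x = g x.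

Definition triv_group : group :=
  @Group unit (fun _ _ => tt) tt (fun _ => tt)
    (fun _ _ _ => eq_refl) (fun x => match x with tt => eq_refl end) (fun _ => eq_refl).

Definition to_triv (H : group) : hom H triv_group :=
  @Hom H triv_group (fun _ => tt) (fun _ _ => eq_refl).

(** M is phi-local: Hom(B,M) -> Hom(A,M), g |-> g o phi, is a bijection
    (homomorphisms being compared extensionally). *)
Definition local (A B : group) (phi : hom A B) (M : group) : Prop :=
  (forall g1 g2 : hom B M, (forall a, g1 (phi a) = g2 (phi a)) -> hom_eq g1 g2) /\
  (forall f : hom A M, exists g : hom B M, forall a, g (phi a) = f a).

Definition is_localization (A B : group) (phi : hom A B)
    (G LG : group) (eta : hom G LG) : Prop :=
  local phi LG /\
  forall M : group, local phi M ->
    forall f : hom G M,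
      exists g : hom LG M,
        (forall x, g (eta x) = f x) /\
        (forall g' : hom LG M, (forall x, g' (eta x) = f x) -> hom_eq g' g).

Definition is_nullification (H : group) : forall G LG : group, hom G LG -> Prop :=
  @is_localization H triv_group (to_triv H).

Definition short_exact (N E Q : group) (i : hom N E) (p : hom E Q) : Prop :=
  (forall x y, i x = i y -> x = y) /\
  (forall q, exists e, p e = q) /\
  (forall e, p e = one <-> exists n, i n = e).

Lemma short_exact_comp (N E Q : group) (i : hom N E) (p : hom E Q) :
  short_exact i p -> forall n, p (i n) = one.
Proof. intros [_ [_ H]] n. apply H. exists n; reflexivity. Qed.

(** * Flatness for a localization-type functor L, given by the predicate
    [Lz G LG eta] ("eta : G -> LG is the L-localization of G").  The functor
    acts on a morphism f : G -> K by the unique a : LG -> LK with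
    a o etaG = etaK o f. *)
Definition L_flat (Lz : forall G LG : group, hom G LG -> Prop)
    (N E Q : group) (i : hom N E) (p : hom E Q) : Prop :=
  forall (LN LE LQ : group) (etaN : hom N LN) (etaE : hom E LE) (etaQ : hom Q LQ),
    Lz N LN etaN -> Lz E LE etaE -> Lz Q LQ etaQ ->
    forall (a : hom LN LE) (b : hom LE LQ),
      (forall x, a (etaN x) = etaE (i x)) ->
      (forall x, b (etaE x) = etaQ (p x)) ->
      short_exact a b.

Section Pullback.
Variables (E Q Q' : group) (p : hom E Q) (f : hom Q' Q).

Definition pb_car : Type := { x : E * Q' | p (fst x) = f (snd x) }.

Lemma pb_mul_proof (x y : pb_car) :
  p (fst (mul (fst (proj1_sig x)) (fst (proj1_sig y)), mul (snd (proj1_sig x)) (snd (proj1_sig y))))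
  = f (snd (mul (fst (proj1_sig x)) (fst (proj1_sig y)), mul (snd (proj1_sig x)) (snd (proj1_sig y)))).
Proof.
  destruct x as [[e1 q1] h1], y as [[e2 q2] h2]; simpl in *.
  rewrite !hmulP, h1, h2. reflexivity.
Qed.

Definition pb_mul (x y : pb_car) : pb_car :=
  exist _ _ (pb_mul_proof x y).

Lemma pb_one_proof : p (fst ((one : E), (one : Q'))) = f (snd ((one : E), (one : Q'))).
Proof. simpl. rewrite !hom1. reflexivity. Qed.

Definition pb_one : pb_car := exist _ _ pb_one_proof.

Lemma pb_inv_proof (x : pb_car) :
  p (fst (inv (fst (proj1_sig x)), inv (snd (proj1_sig x))))
  = f (snd (inv (fst (proj1_sig x)), inv (snd (proj1_sig x)))).
Proof.
  destruct x as [[e q] h]; simpl in *. rewrite !homV, h. reflexivity.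
Qed.

Definition pb_inv (x : pb_car) : pb_car := exist _ _ (pb_inv_proof x).

Lemma pb_ext (x y : pb_car) : proj1_sig x = proj1_sig y -> x = y.
Proof.
  destruct x as [x hx], y as [y hy]; simpl. intros ->.
  f_equal. apply proof_irrelevance.
Qed.

Lemma pb_mulA x y z : pb_mul x (pb_mul y z) = pb_mul (pb_mul x y) z.
Proof. apply pb_ext; simpl. rewrite !mulA. reflexivity. Qed.

Lemma pb_mul1g x : pb_mul pb_one x = x.
Proof. apply pb_ext; destruct x as [[e q] h]; simpl. rewrite !mul1g. reflexivity. Qed.

Lemma pb_mulVg x : pb_mul (pb_inv x) x = pb_one.
Proof. apply pb_ext; destruct x as [[e q] h]; simpl. rewrite !mulVg. reflexivity. Qed.

Definition pullback : group := @Group pb_car pb_mul pb_one pb_inv pb_mulA pb_mul1g pb_mulVg.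

Definition pb_proj : hom pullback Q' :=
  @Hom pullback Q' (fun x => snd (proj1_sig x)) (fun _ _ => eq_refl).

Variables (N : group) (i : hom N E) (hi : forall n, p (i n) = one).

Lemma pb_in_proof (n : N) : p (fst (i n, (one : Q'))) = f (snd (i n, (one : Q'))).
Proof. simpl. rewrite hi, hom1. reflexivity. Qed.

Definition pb_in_fun (n : N) : pullback := exist _ _ (pb_in_proof n).

Lemma pb_in_mul (x y : N) : pb_in_fun (mul x y) = mul (pb_in_fun x) (pb_in_fun y).
Proof. apply pb_ext; simpl. rewrite hmulP, mul1g. reflexivity. Qed.

Definition pb_in : hom N pullback := @Hom N pullback pb_in_fun pb_in_mul.
End Pullback.

Definition conditionally_flat (Lz : forall G LG : group, hom G LG -> Prop) : Prop :=
  forall (N E Q : group) (i : hom N E) (p : hom E Q) (ex : short_exact i p),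
    L_flat Lz i p ->
    forall (Q' : group) (f : hom Q' Q),
      L_flat Lz (pb_in p f i (short_exact_comp ex)) (pb_proj p f).

(* Main.v *)
Require Import Defs.
From Stdlib Require Import ProofIrrelevance ClassicalEpsilon FunctionalExtensionality PropExtensionality.

Section Alg.
Context {G : group}.
Lemma mulKg (x y : G) : mul (inv x) (mul x y) = y.
Proof. rewrite mulA, mulVg. apply mul1g. Qed.
Lemma mulKVg (x y : G) : mul x (mul (inv x) y) = y.
Proof. rewrite mulA, mulgV. apply mul1g. Qed.
Lemma mul_left_inj (x y z : G) : mul x y = mul x z -> y = z.
Proof. intro E. transitivity (mul (inv x) (mul x y)). symmetry; apply mulKg.
  rewrite E; apply mulKg. Qed.
Lemma inv_uniq (x y : G) : mul x y = one -> y = inv x.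
Proof. intro E. apply (mul_left_inj x). rewrite E, mulgV. reflexivity. Qed.
Lemma invK (x : G) : inv (inv x) = x.
Proof. symmetry. apply inv_uniq. apply mulVg. Qed.
Lemma invM (x y : G) : inv (mul x y) = mul (inv y) (inv x).
Proof. symmetry. apply inv_uniq. rewrite <- mulA, (mulA y), mulgV, mul1g. apply mulgV. Qed.
Lemma inv1 : inv (one : G) = one.
Proof. symmetry. apply inv_uniq. apply mul1g. Qed.
Lemma eq_div (x y : G) : x = y <-> mul (inv x) y = one.
Proof. split. intros ->; apply mulVg. intro E. apply inv_uniq in E. rewrite invK in E. auto. Qed.
End Alg.

Ltac gnorm := repeat rewrite <- mulA; repeat (rewrite ?mulKVg, ?mulKg, ?mulgV, ?mulVg, ?mulg1, ?mul1g).

Definition hcomp (A B C : group) (f : hom A B) (g : hom B C) : hom A C.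
Proof. refine (@Hom A C (fun x => g (f x)) _). intros x y. rewrite !hmulP. reflexivity. Defined.
Arguments hcomp {A B C}.

Record normal_pred (G : group) (S : G -> Prop) : Prop := {
  ns1 : S one; nsM : forall x y, S x -> S y -> S (mul x y);
  nsV : forall x, S x -> S (inv x);
  nsJ : forall g x, S x -> S (mul (mul (inv g) x) g) }.
Arguments normal_pred {G}.
Arguments ns1 {G S}. Arguments nsM {G S}. Arguments nsV {G S}. Arguments nsJ {G S}.

Section Quot.
Context {G : group} (S : G -> Prop) (HS : normal_pred S).
Definition cls (x : G) : G -> Prop := fun y => S (mul (inv x) y).
Definition qcar := { P : G -> Prop | exists x, P = cls x }.
Definition qin (x : G) : qcar := exist _ (cls x) (ex_intro _ x eq_refl).
Definition rep (P : qcar) : G := proj1_sig (constructive_indefinite_description _ (proj2_sig P)).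
Lemma qext (P R : qcar) : proj1_sig P = proj1_sig R -> P = R.
Proof. destruct P, R; simpl; intros ->; f_equal; apply proof_irrelevance. Qed.
Lemma rep_spec P : qin (rep P) = P.
Proof. apply qext. unfold rep. destruct (constructive_indefinite_description _ (proj2_sig P)) as [x hx].
  simpl. auto. Qed.
Lemma qsurj P : exists x, P = qin x.
Proof. exists (rep P). symmetry; apply rep_spec. Qed.
Lemma qin_eq x y : qin x = qin y <-> S (mul (inv x) y).
Proof. split.
  - intro E. assert (E2 : cls x y = cls y y) by (change (proj1_sig (qin x) y = proj1_sig (qin y) y); rewrite E; auto).
    unfold cls at 1 in E2. rewrite E2. unfold cls. rewrite mulVg. apply (ns1 HS).
  - intro K. apply qext. simpl. unfold cls. apply functional_extensionality. intro z.
    apply propositional_extensionality. split; intro K2.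
    + replace (mul (inv y) z) with (mul (inv (mul (inv x) y)) (mul (inv x) z)).
      apply (nsM HS); auto. apply (nsV HS); auto.
      rewrite invM, invK. gnorm. reflexivity.
    + replace (mul (inv x) z) with (mul (mul (inv x) y) (mul (inv y) z)).
      apply (nsM HS); auto. gnorm. reflexivity.
Qed.
Lemma rep_in x : S (mul (inv (rep (qin x))) x).
Proof. apply qin_eq. apply rep_spec. Qed.
Definition qmul (P R : qcar) : qcar := qin (mul (rep P) (rep R)).
Definition qinv (P : qcar) : qcar := qin (inv (rep P)).
Lemma qmul_in x y : qmul (qin x) (qin y) = qin (mul x y).
Proof. unfold qmul. apply qin_eq. pose proof (rep_in x) as K1. pose proof (rep_in y) as K2.
  set (x0 := rep (qin x)) in *. set (y0 := rep (qin y)) in *.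
  replace (mul (inv (mul x0 y0)) (mul x y)) with
    (mul (mul (mul (inv y0) (mul (inv x0) x)) y0) (mul (inv y0) y)).
  apply (nsM HS); auto. apply (nsJ HS); auto.
  rewrite invM. gnorm. reflexivity. Qed.
Lemma qinv_in x : qinv (qin x) = qin (inv x).
Proof. unfold qinv. apply qin_eq. pose proof (rep_in x) as K1.
  set (x0 := rep (qin x)) in *.
  replace (mul (inv (inv x0)) (inv x)) with
    (mul (mul (inv (inv x0)) (inv (mul (inv x0) x))) (inv x0)).
  apply (nsJ HS). apply (nsV HS); auto.
  rewrite invM, !invK. gnorm. reflexivity. Qed.
Lemma qmulA (P R T : qcar) : qmul P (qmul R T) = qmul (qmul P R) T.
Proof. destruct (qsurj P) as [x ->]; destruct (qsurj R) as [y ->]; destruct (qsurj T) as [z ->].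
  rewrite !qmul_in, mulA. reflexivity. Qed.
Lemma qmul1 (P : qcar) : qmul (qin one) P = P.
Proof. destruct (qsurj P) as [x ->]. rewrite qmul_in, mul1g. reflexivity. Qed.
Lemma qmulV (P : qcar) : qmul (qinv P) P = qin one.
Proof. destruct (qsurj P) as [x ->]. rewrite qinv_in, qmul_in, mulVg. reflexivity. Qed.
Definition Qgroup : group := @Group qcar qmul (qin one) qinv qmulA qmul1 qmulV.
Definition qpi : hom G Qgroup := @Hom G Qgroup qin (fun x y => eq_sym (qmul_in x y)).
End Quot.

Lemma quotient_exists (G : group) (S : G -> Prop) : normal_pred S ->
  exists (Qt : group) (pi : hom G Qt),
    (forall x, pi x = one <-> S x) /\ (forall y, exists x, pi x = y) /\
    (forall (M : group) (g : hom G M), (forall x, S x -> g x = one) ->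
        exists g' : hom Qt M, forall x, g' (pi x) = g x).
Proof.
  intro HS. exists (Qgroup S HS), (qpi S HS). split; [|split].
  - intro x. simpl. change (qin S x = qin S one <-> S x). rewrite (qin_eq S HS).
    rewrite mulg1. split; intro K; [rewrite <- (invK x)|]; apply (nsV HS); auto.
  - intro y. destruct (qsurj S y) as [x ->]. exists x. reflexivity.
  - intros M g Hg.
    assert (gr : forall u v, S (mul (inv u) v) -> g u = g v).
    { intros u v K. apply Hg in K. rewrite hmulP, homV in K. apply inv_uniq in K.
      rewrite invK in K. auto. }
    assert (gri : forall x, g (rep S (qin S x)) = g x) by (intro x; apply gr, (rep_in S HS)).
    unshelve eexists (@Hom (Qgroup S HS) M (fun P => g (rep S P)) _).
    + intros P R. simpl. unfold qmul. rewrite gri, hmulP. reflexivity.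
    + intro x. simpl. apply gri.
Qed.

Section Sub.
Context {G : group} (P : G -> Prop) (P1 : P one) (PM : forall x y, P x -> P y -> P (mul x y))
  (PV : forall x, P x -> P (inv x)).
Definition scar := {x : G | P x}.
Definition smul (u v : scar) : scar := exist _ _ (PM _ _ (proj2_sig u) (proj2_sig v)).
Definition sinv (u : scar) : scar := exist _ _ (PV _ (proj2_sig u)).
Definition sone : scar := exist _ _ P1.
Lemma sext (u v : scar) : proj1_sig u = proj1_sig v -> u = v.
Proof. destruct u, v; simpl; intros ->; f_equal; apply proof_irrelevance. Qed.
Lemma smulA u v w : smul u (smul v w) = smul (smul u v) w.
Proof. apply sext; simpl. apply mulA. Qed.
Lemma smul1 u : smul sone u = u.
Proof. apply sext; simpl. apply mul1g. Qed.
Lemma smulV u : smul (sinv u) u = sone.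
Proof. apply sext; simpl. apply mulVg. Qed.
Definition Sgroup : group := @Group scar smul sone sinv smulA smul1 smulV.
Definition sincl : hom Sgroup G := @Hom Sgroup G (fun u => proj1_sig u) (fun _ _ => eq_refl).
End Sub.

Section Null.
Variable H : group.
Definition null (M : group) := forall (h : hom H M) a, h a = one.

Lemma local_null M : local (to_triv H) M <-> null M.
Proof. split.
  - intros [_ Hex] h a. destruct (Hex h) as [g Hg]. rewrite <- Hg. exact (hom1 g).
  - intro Hn. split.
    + intros g1 g2 _ x. destruct x. transitivity (one : M); [exact (hom1 g1)|symmetry; exact (hom1 g2)].
    + intro f. exists (@Hom triv_group M (fun _ => one) (fun _ _ => eq_sym (mul1g one))).
      intro a. simpl. symmetry; apply Hn.
Qed.

Definition Kil (G : group) (x : G) : Prop :=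
  forall M, null M -> forall g : hom G M, g x = one.
Arguments Kil {G} x.

Lemma Kil_hom (G K : group) (phi : hom G K) x : Kil x -> Kil (phi x).
Proof. intros KX M HM g. exact (KX M HM (hcomp phi g)). Qed.

Lemma Kil_normal (G : group) : normal_pred (@Kil G).
Proof. split.
  - intros M HM g. apply hom1.
  - intros x y Kx Ky M HM g. rewrite hmulP, Kx, Ky; auto. apply mul1g.
  - intros x Kx M HM g. rewrite homV, Kx; auto. apply inv1.
  - intros z x Kx M HM g. rewrite !hmulP, homV, Kx; auto. rewrite mulg1. apply mulVg.
Qed.

Section Loc.
Variables (G LG : group) (eta : hom G LG) (HL : @is_nullification H G LG eta).

Lemma loc_ker x : eta x = one <-> Kil x.
Proof. destruct HL as [HLL Hin]. split.
  - intros E M HM g. destruct (Hin M (proj2 (local_null M) HM) g) as [g' [Hg' _]].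
    rewrite <- Hg', E. apply hom1.
  - intros K. apply K. apply local_null; exact HLL.
Qed.

Lemma loc_eq x y : eta x = eta y <-> Kil (mul (inv x) y).
Proof. rewrite <- loc_ker, hmulP, homV. apply eq_div. Qed.

Lemma loc_null : null LG.
Proof. apply local_null, HL. Qed.

Lemma loc_surj y : exists x, eta x = y.
Proof.
  pose proof HL as [HLL Hin].
  set (P := fun y : LG => exists x, eta x = y).
  assert (P1 : P one) by (exists one; apply hom1).
  assert (PM : forall u v, P u -> P v -> P (mul u v)).
  { intros u v [x <-] [x' <-]. exists (mul x x'). apply hmulP. }
  assert (PV : forall u, P u -> P (inv u)).
  { intros u [x <-]. exists (inv x). apply homV. }
  assert (SN : null (Sgroup P P1 PM PV)).
  { intros h a. apply sext. simpl. exact (loc_null (hcomp h (sincl P P1 PM PV)) a). }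
  assert (fe_ex : exists fe : hom G (Sgroup P P1 PM PV), forall x, proj1_sig (fe x) = eta x).
  { unshelve eexists (@Hom G (Sgroup P P1 PM PV) (fun x => exist P (eta x) (ex_intro _ x eq_refl)) _).
    - intros x y0. apply sext. simpl. apply hmulP.
    - intro x. reflexivity. }
  destruct fe_ex as [fe Hfe].
  destruct (Hin _ (proj2 (local_null _) SN) fe) as [g [Hg _]].
  destruct (Hin _ HLL eta) as [g0 [_ Hu]].
  assert (E1 : proj1_sig (g y) = g0 y).
  { apply (Hu (hcomp g (sincl P P1 PM PV))). intro x. simpl. rewrite Hg. apply Hfe. }
  assert (E2 : y = g0 y).
  { apply (Hu (@Hom LG LG (fun z => z) (fun _ _ => eq_refl))). reflexivity. }
  destruct (proj2_sig (g y)) as [x Hx]. exists x. rewrite Hx, E1. auto.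
Qed.
End Loc.

Lemma loc_exists (G : group) : exists (LG : group) (eta : hom G LG), @is_nullification H G LG eta.
Proof.
  destruct (@quotient_exists G _ (Kil_normal G)) as [Qt [pi [Hker [Hsurj Huniv]]]].
  exists Qt, pi. split.
  - apply local_null. intros h a. destruct (Hsurj (h a)) as [x Hx]. rewrite <- Hx.
    apply Hker. intros M HM g.
    destruct (Huniv M g (fun x K => K M HM g)) as [g' Hg'].
    rewrite <- Hg', Hx. exact (HM (hcomp h g') a).
  - intros M HM g. apply local_null in HM.
    destruct (Huniv M g (fun x K => K M HM g)) as [g' Hg'].
    exists g'. split; auto. intros g'' Hg'' y. destruct (Hsurj y) as [x <-].
    rewrite Hg'', Hg'. reflexivity.
Qed.
End Null.
Arguments Kil H {G} x.
Arguments loc_ker H {G LG eta} HL x.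
Arguments loc_eq H {G LG eta} HL x y.
Arguments loc_null H {G LG eta} HL.
Arguments loc_surj H {G LG eta} HL y.
Arguments Kil_hom H {G K} phi {x}.

Lemma Kil_mul H (G : group) (x y : G) : Kil H x -> Kil H y -> Kil H (mul x y).
Proof. apply (nsM (Kil_normal H G)). Qed.
Lemma Kil_inv H (G : group) (x : G) : Kil H x -> Kil H (inv x).
Proof. apply (nsV (Kil_normal H G)). Qed.

Theorem theorem3p2 (H : group) : conditionally_flat (is_nullification H).
Proof.
  intros N E Q i p ex Hflat Q' f LN LE' LQ' etaN etaE' etaQ' HN HE' HQ' a' b' Ha' Hb'.
  set (i' := pb_in p f i (short_exact_comp ex)) in *.
  set (pr := pb_proj p f) in *.
  set (pf1 := @Hom (pullback p f) E (fun x => fst (proj1_sig x)) (fun _ _ => eq_refl)).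
  pose proof ex as [iinj [psurj pker]].
  destruct (loc_exists H E) as [LE [etaE HE]].
  destruct (loc_exists H Q) as [LQ [etaQ HQ]].
  destruct HN as [HLN HinN]. destruct HE as [HLE HinE].
  destruct (HinN LE HLE (hcomp i etaE)) as [a [Ha _]].
  destruct (HinE LQ (proj1 HQ) (hcomp p etaQ)) as [b [Hb _]].
  assert (HN : is_nullification H etaN) by (split; auto).
  assert (HE : is_nullification H etaE) by (split; auto).
  destruct (Hflat LN LE LQ etaN etaE etaQ HN HE HQ a b Ha Hb) as [ainj [bsurj bker]].
  assert (HA : forall n, Kil H (i n) -> Kil H n).
  { intros n K. apply (loc_ker _ HN). apply ainj. rewrite Ha, (hom1 a). apply (loc_ker _ HE); auto. }
  assert (HB : forall e, Kil H (p e) -> exists n, Kil H (mul (inv (i n)) e)).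
  { intros e K. assert (B1 : b (etaE e) = one) by (rewrite Hb; apply (loc_ker _ HQ); auto).
    apply bker in B1. destruct B1 as [y Hy]. destruct (loc_surj _ HN y) as [n <-]. exists n.
    apply (loc_eq _ HE). rewrite <- Hy, Ha. reflexivity. }
  clear Hflat ainj bsurj bker Ha Hb a b HinN HinE HLE HE HQ.
  assert (lift : forall z, exists u : pullback p f, pr u = z).
  { intro z. destruct (psurj (f z)) as [e He].
    exists (exist _ (e, z) He). reflexivity. }
  assert (pb_eq : forall x y : pullback p f, pf1 x = pf1 y -> pr x = pr y -> x = y).
  { intros [[e q] h] [[e' q'] h']. simpl. intros -> ->. apply pb_ext. reflexivity. }
  assert (Hi'n : forall n, pf1 (i' n) = i n /\ pr (i' n) = one) by (intro; split; reflexivity).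
  assert (pcomm : forall w, p (pf1 w) = f (pr w)) by (intros [[e q] h]; exact h).
  set (S := fun y => exists w, Kil H w /\ pr w = y).
  assert (SN : normal_pred S).
  { split.
    - exists one. split. apply (ns1 (Kil_normal H _)). reflexivity.
    - intros x y [w1 [K1 <-]] [w2 [K2 <-]]. exists (mul w1 w2). split.
      apply Kil_mul; auto. apply hmulP.
    - intros x [w1 [K1 <-]]. exists (inv w1). split. apply Kil_inv; auto. apply homV.
    - intros z x [w1 [K1 <-]]. destruct (lift z) as [u <-].
      exists (mul (mul (inv u) w1) u). split. apply (nsJ (Kil_normal H _)); auto.
      rewrite !hmulP, homV. reflexivity. }
  assert (WD : forall w, Kil H (pf1 w) -> S (pr w) -> Kil H w).
  { intros w K1 [w0 [K0 H0]].
    set (u := mul w (inv w0)).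
    assert (Hu1 : pr u = one) by (unfold u; rewrite hmulP, homV, H0; apply mulgV).
    assert (Hu2 : p (pf1 u) = one) by (rewrite pcomm, Hu1; apply hom1).
    apply pker in Hu2. destruct Hu2 as [n Hn].
    assert (Ku : Kil H u).
    { assert (Eu : i' n = u) by (apply pb_eq; [rewrite <- Hn; reflexivity | rewrite Hu1; reflexivity]).
      rewrite <- Eu. apply Kil_hom. apply HA. rewrite Hn. unfold u. rewrite hmulP, homV.
      apply Kil_mul; auto. apply Kil_inv. apply Kil_hom; auto. }
    replace w with (mul u w0). apply Kil_mul; auto. unfold u. gnorm. reflexivity. }
  assert (Key : forall y, Kil H y -> S y).
  { destruct (@quotient_exists Q' S SN) as [Qt [pi [Hker [Hsurj Huniv]]]].
    intros y Ky. apply Hker. apply Ky.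
    intros h a0.
    assert (Hch : forall a, exists w : pullback p f, Kil H (pf1 w) /\ pi (pr w) = h a).
    { intro a. destruct (Hsurj (h a)) as [y0 Hy0].
      assert (Kf : Kil H (f y0)).
      { intros M HM g.
        assert (gS : forall z, S z -> hcomp f g z = one).
        { intros z [w0 [K0 <-]]. change (g (f (pr w0)) = one). rewrite <- pcomm.
          exact (Kil_hom _ (hcomp pf1 p) K0 M HM g). }
        destruct (Huniv M (hcomp f g) gS) as [g' Hg'].
        change (g (f y0)) with (hcomp f g y0). rewrite <- Hg', Hy0.
        exact (HM (hcomp h g') a). }
      destruct (lift y0) as [u Hu].
      rewrite <- Hu, <- pcomm in Kf. destruct (HB _ Kf) as [n Kn].
      exists (mul (inv (i' n)) u). split.
      - exact Kn.
      - rewrite hmulP, homV, (proj2 (Hi'n n)), inv1, mul1g, Hu. exact Hy0. }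
    assert (HW : exists W : H -> pullback p f, forall a, Kil H (pf1 (W a)) /\ pi (pr (W a)) = h a).
    { exists (fun a => proj1_sig (constructive_indefinite_description _ (Hch a))).
      intro a. exact (proj2_sig (constructive_indefinite_description _ (Hch a))). }
    destruct HW as [W HW].
    assert (psi_ex : exists psi : hom H LE', forall a, psi a = etaE' (W a)).
    { unshelve eexists (@Hom H LE' (fun a => etaE' (W a)) _).
      - intros x y0. simpl. rewrite <- hmulP. symmetry. apply (loc_eq _ HE').
        apply WD.
        + rewrite hmulP, homV, hmulP. apply Kil_mul. apply Kil_inv. apply Kil_mul.
          apply HW. apply HW. apply HW.
        + apply Hker. rewrite (hmulP pr), (homV pr), (hmulP pr), (hmulP pi), (homV pi), (hmulP pi).
          rewrite (proj2 (HW x)), (proj2 (HW y0)), (proj2 (HW (mul x y0))), hmulP. apply mulVg.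
      - intro; reflexivity. }
    destruct psi_ex as [psi Hpsi].
    assert (K : etaE' (W a0) = one) by (rewrite <- Hpsi; apply (loc_null _ HE')).
    apply (loc_ker _ HE') in K.
    rewrite <- (proj2 (HW a0)). apply Hker. exists (W a0). auto. }
  split; [|split].
  - intros x y Exy. destruct (loc_surj _ HN x) as [n <-]. destruct (loc_surj _ HN y) as [m <-].
    rewrite !Ha' in Exy. apply (loc_eq _ HE') in Exy. apply (loc_eq _ HN). apply HA.
    replace (i (mul (inv n) m)) with (pf1 (mul (inv (i' n)) (i' m))).
    apply Kil_hom; auto. rewrite (hmulP i), (homV i). reflexivity.
  - intro y. destruct (loc_surj _ HQ' y) as [q <-]. destruct (lift q) as [u Hu].
    exists (etaE' u). rewrite Hb', Hu. reflexivity.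
  - intro x. destruct (loc_surj _ HE' x) as [w <-]. rewrite Hb'. split.
    + intro E1. apply (loc_ker _ HQ') in E1. apply Key in E1. destruct E1 as [w0 [K0 H0]].
      set (u := mul w (inv w0)).
      assert (Hu1 : pr u = one) by (unfold u; rewrite hmulP, homV, H0; apply mulgV).
      assert (Hu2 : p (pf1 u) = one) by (rewrite pcomm, Hu1; apply hom1).
      apply pker in Hu2. destruct Hu2 as [n Hn].
      assert (Eu : i' n = u) by (apply pb_eq; [rewrite <- Hn; reflexivity | rewrite Hu1; reflexivity]).
      exists (etaN n). rewrite Ha'. apply (loc_eq _ HE'). rewrite Eu. unfold u.
      rewrite invM, invK. gnorm. exact K0.
    + intros [y Hy]. destruct (loc_surj _ HN y) as [n <-]. rewrite Ha' in Hy.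
      rewrite <- Hb', <- Hy, Hb'. exact (hom1 etaQ').
Qed.
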